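(* Let $G$ be a finitely generated group, $U$ a finite symmetric generating set of $G$, and $H\leqslant G$ with $[G:H]=d$. Suppose there exist $\alpha,\beta>0$ such that every finite symmetric generating set $V$ of $H$ satisfies $|V^n|\geqslant(\alpha|V|)^{\beta n}$ for every $n\in\mathbb{N}$. Let $m=2d!+1$. Then $$|U^n|\geqslant\bigg(\frac{\alpha}{2^{m/\beta}d}|U|\bigg)^{\frac{\beta n}{m}}$$ for every $n\in\mathbb{N}$.
   Context: $U^n=\{u_1\cdots u_n:u_i\in U\}$; symmetric means $U=U^{-1}$. *)

(* Defs.v *)
From Stdlib Require Import Reals List Arith.
Import ListNotations.
Open Scope R_scope.

Section Grp.
Context {G : Type} (mul : G -> G -> G) (one : G) (inv : G -> G).

Definition is_group : Prop :=
  (forall x y z, mul x (mul y z) = mul (mul x y) z) /\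
  (forall x, mul one x = x) /\ (forall x, mul x one = x) /\
  (forall x, mul (inv x) x = one) /\ (forall x, mul x (inv x) = one).

Definition prod_list (l : list G) : G := fold_right mul one l.

Definition set_pow (U : G -> Prop) (n : nat) : G -> Prop :=
  fun x => exists l : list G, length l = n /\ Forall U l /\ prod_list l = x.

Definition symmetric (U : G -> Prop) : Prop := forall x, U x <-> U (inv x).

Definition is_subgroup (H : G -> Prop) : Prop :=
  H one /\ (forall x y, H x -> H y -> H (mul x y)) /\ (forall x, H x -> H (inv x)).

Definition generates (U S : G -> Prop) : Prop :=
  (forall x, U x -> S x) /\
  (forall x, S x -> exists l : list G,
       Forall (fun y => U y \/ U (inv y)) l /\ prod_list l = x).

(* [G : H] = d : there are exactly d left cosets g H *)
Definition has_index (H : G -> Prop) (d : nat) : Prop :=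
  exists l : list G, length l = d /\
    (forall x, exists g, In g l /\ H (mul (inv g) x)) /\
    (forall i j, (i < d)%nat -> (j < d)%nat ->
        H (mul (inv (nth i l one)) (nth j l one)) -> i = j).

End Grp.

Definition has_card {G : Type} (A : G -> Prop) (k : nat) : Prop :=
  exists l : list G, NoDup l /\ length l = k /\ (forall x, A x <-> In x l).

(* real power x^y for x >= 0 with the convention 0^0 = 1, 0^y = 0 (y <> 0) *)
Definition rpow (x y : R) : R :=
  if Req_EM_T x 0 then (if Req_EM_T y 0 then 1 else 0) else Rpower x y.

(* Main.v *)
Require Import Defs.
From Stdlib Require Import Reals List Arith Lia Lra Classical ClassicalEpsilon.
Import ListNotations.

Local Open Scope nat_scope.
Lemma card_cover {T} (A : T -> Prop) a l : has_card A a -> (forall x, A x -> In x l) -> a <= length l.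
Proof. intros [l0 [nd [<- h]]] c. apply NoDup_incl_length; auto. intros x hx; apply c, h; auto. Qed.

Lemma card_nodup {T} (A : T -> Prop) a l : has_card A a -> NoDup l -> (forall x, In x l -> A x) -> length l <= a.
Proof. intros [l0 [nd [<- h]]] n c. apply NoDup_incl_length; auto. intros x hx; apply h, c; auto. Qed.

Lemma card_mono {T} (A B : T -> Prop) a b : has_card A a -> has_card B b -> (forall x, A x -> B x) -> a <= b.
Proof. intros ha [l [nd [<- h]]] s. eapply card_cover; eauto. intros; apply h; auto. Qed.

Lemma card_uniq {T} (A : T -> Prop) a b : has_card A a -> has_card A b -> a = b.
Proof. intros; apply Nat.le_antisymm; eapply card_mono; eauto. Qed.

Lemma fin_card {T} (A : T -> Prop) l : (forall x, A x -> In x l) -> exists a, has_card A a.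
Proof. revert A; induction l as [|b l IH]; intros A c.
  - exists 0, nil. split; [constructor|split; auto]. intro x; split; [intro h; apply (c x h)|simpl; tauto].
  - destruct (IH (fun x => A x /\ x <> b)) as [a [l' [nd [ln h]]]].
    { intros x [hx ne]. destruct (c x hx); [congruence|auto]. }
    destruct (classic (A b)) as [hb|hb].
    + exists (S a), (b :: l'). split; [|split]. constructor; auto. intro hi; apply h in hi; tauto.
      simpl; auto. intro x; split; intro hx. destruct (classic (x = b)). left; auto. right; apply h; auto.
      destruct hx as [<-|hx]; auto. apply h; auto.
    + exists a, l'. split; auto. split; auto. intro x; split; intro hx. apply h. split; auto. intro; subst; tauto.
      apply h; auto.
Qed.

Lemma len_fm {A B C} (f : A -> B -> C) la lb : length (flat_map (fun x => map (f x) lb) la) = length la * length lb.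
Proof. induction la; simpl; auto. rewrite length_app, length_map, IHla; auto. Qed.

Lemma Forall_firstn {A} (P : A -> Prop) n l : Forall P l -> Forall P (firstn n l).
Proof. revert l; induction n; intros l f; simpl; auto. destruct l; auto. inversion f; subst; constructor; auto. Qed.
Lemma Forall_skipn {A} (P : A -> Prop) n l : Forall P l -> Forall P (skipn n l).
Proof. revert l; induction n; intros l f; simpl; auto. destruct l; auto. inversion f; subst; auto. Qed.

Section Grp.
Context {G : Type} (mul : G -> G -> G) (one : G) (inv : G -> G).
Context (Hg : is_group mul one inv).

Lemma g_assoc x y z : mul x (mul y z) = mul (mul x y) z.
Proof. destruct Hg as [h _]; apply h. Qed.
Lemma g_1l x : mul one x = x.
Proof. destruct Hg as [_ [h _]]; apply h. Qed.
Lemma g_1r x : mul x one = x.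
Proof. destruct Hg as [_ [_ [h _]]]; apply h. Qed.
Lemma g_Vl x : mul (inv x) x = one.
Proof. destruct Hg as [_ [_ [_ [h _]]]]; apply h. Qed.
Lemma g_Vr x : mul x (inv x) = one.
Proof. destruct Hg as [_ [_ [_ [_ h]]]]; apply h. Qed.

Lemma g_Kl x y : mul (inv x) (mul x y) = y.
Proof. rewrite g_assoc, g_Vl, g_1l; reflexivity. Qed.
Lemma g_Kr x y : mul x (mul (inv x) y) = y.
Proof. rewrite g_assoc, g_Vr, g_1l; reflexivity. Qed.
Lemma g_inv_uniq x y : mul x y = one -> y = inv x.
Proof. intro h. rewrite <- (g_Kl x y), h, g_1r. reflexivity. Qed.
Lemma g_invK x : inv (inv x) = x.
Proof. symmetry. apply g_inv_uniq. apply g_Vl. Qed.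
Lemma g_inv1 : inv one = one.
Proof. symmetry. apply g_inv_uniq. apply g_1l. Qed.
Lemma g_invM x y : inv (mul x y) = mul (inv y) (inv x).
Proof. symmetry. apply g_inv_uniq.
  rewrite <- g_assoc, (g_assoc y), g_Vr, g_1l, g_Vr. reflexivity. Qed.
Lemma g_mul_inj_r u x y : mul x u = mul y u -> x = y.
Proof. intro h. rewrite <- (g_1r x), <- (g_1r y), <- (g_Vr u), !g_assoc, h. reflexivity. Qed.
Lemma g_mul_inj_l u x y : mul u x = mul u y -> x = y.
Proof. intro h. rewrite <- (g_Kl u x), <- (g_Kl u y), h. reflexivity. Qed.

Notation prod := (prod_list mul one).
Notation pw := (set_pow mul one).

Lemma prod_app l1 l2 : prod (l1 ++ l2) = mul (prod l1) (prod l2).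
Proof. induction l1; simpl. rewrite g_1l; auto. rewrite IHl1, g_assoc; auto. Qed.

Lemma prod_inv l : inv (prod l) = prod (rev (map inv l)).
Proof. induction l; simpl. apply g_inv1. rewrite prod_app, g_invM, IHl; simpl. rewrite g_1r; auto. Qed.

Lemma pw_mul U a b x y : pw U a x -> pw U b y -> pw U (a + b) (mul x y).
Proof. intros [l1 [h1 [f1 p1]]] [l2 [h2 [f2 p2]]]. exists (l1 ++ l2).
  rewrite length_app, prod_app, Forall_app; subst; auto. Qed.

Lemma pw_split U a b z : pw U (a + b) z -> exists x y, pw U a x /\ pw U b y /\ z = mul x y.
Proof. intros [l [h [f p]]]. exists (prod (firstn a l)), (prod (skipn a l)).
  split; [|split]. exists (firstn a l); repeat split; auto. rewrite length_firstn; lia.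
  rewrite <- (firstn_skipn a l) in f. apply Forall_app in f; tauto.
  exists (skipn a l); repeat split; auto. rewrite length_skipn; lia.
  rewrite <- (firstn_skipn a l) in f. apply Forall_app in f; tauto.
  rewrite <- prod_app, firstn_skipn; auto. Qed.

Lemma pw_0 U x : pw U 0 x <-> x = one.
Proof. split. intros [l [h [_ p]]]. destruct l; simpl in *; try discriminate; auto.
  intro; subst; exists nil; simpl; auto. Qed.

Lemma pw_1 U x : pw U 1 x <-> U x.
Proof. split. intros [l [h [f p]]]. destruct l as [|a [|b l]]; simpl in *; try discriminate.
  inversion f; subst. rewrite g_1r; auto.
  intro; exists [x]; simpl; rewrite g_1r; auto. Qed.

Lemma pw_inv U n x : symmetric inv U -> pw U n x -> pw U n (inv x).
Proof. intros hs [l [h [f p]]]. exists (rev (map inv l)). rewrite length_rev, length_map, <- prod_inv, p.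
  repeat split; auto. apply Forall_rev. apply Forall_map. eapply Forall_impl; [|exact f].
  intros a ha; apply hs; rewrite g_invK; auto. Qed.

Lemma pw_pad U n x u : U u -> symmetric inv U -> pw U n x -> pw U (S (S n)) x.
Proof. intros hu hs hx. replace (S (S n)) with (2 + n) by lia.
  replace x with (mul (mul u (inv u)) x) by (rewrite g_Vr, g_1l; auto).
  apply pw_mul; auto. replace 2 with (1+1) by lia. apply pw_mul; apply pw_1; auto. apply hs; rewrite g_invK; auto. Qed.



Lemma pw_cover U lU : (forall x, U x -> In x lU) -> forall n, exists l, forall x, pw U n x -> In x l.
Proof. intros c n. induction n as [|n [l IH]].
  - exists [one]. intros x hx. apply (proj1 (pw_0 U x)) in hx; subst; simpl; auto.
  - exists (flat_map (fun u => map (mul u) l) lU). intros x hx.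
    replace (S n) with (1 + n) in hx by lia. destruct (pw_split _ _ _ _ hx) as [u [y [hu [hy ->]]]].
    apply (proj1 (pw_1 U u)) in hu. apply in_flat_map. exists u; split; auto. apply in_map; auto.
Qed.

Lemma pw_card U lU : (forall x, U x -> In x lU) -> forall n, exists a, has_card (pw U n) a.
Proof. intros c n. destruct (pw_cover U lU c n) as [l h]. eapply fin_card; eauto. Qed.

Lemma card_pw_mul U p q a b c : has_card (pw U p) a -> has_card (pw U q) b -> has_card (pw U (p + q)) c -> c <= a * b.
Proof. intros [la [_ [<- ha]]] [lb [_ [<- hb]]] hc.
  assert (c <= length (flat_map (fun x => map (mul x) lb) la)).
  { eapply card_cover; eauto. intros z hz. destruct (pw_split _ _ _ _ hz) as [x [y [hx [hy ->]]]].
    apply in_flat_map. exists x; split. apply ha; auto. apply in_map, hb; auto. }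
  rewrite len_fm in H. auto. Qed.

Lemma card_pw_mono U u i a b : U u -> has_card (pw U i) a -> has_card (pw U (S i)) b -> a <= b.
Proof. intros hu [la [nd [<- ha]]] hb.
  assert (length (map (fun x => mul x u) la) <= b).
  { eapply card_nodup; eauto. apply NoDup_map_NoDup_ForallPairs; auto. intros x y _ _; apply g_mul_inj_r.
    intros z hz. apply in_map_iff in hz. destruct hz as [x [<- hx]]. replace (S i) with (i + 1) by lia.
    apply pw_mul. apply ha; auto. apply pw_1; auto. }
  rewrite length_map in H; auto. Qed.

Lemma card_pw_le U lU u i j a b : (forall x, U x -> In x lU) -> U u -> i <= j -> has_card (pw U i) a -> has_card (pw U j) b -> a <= b.
Proof. intros cU hu hij. revert b. induction hij; intros b ha hb.
  rewrite (card_uniq _ _ _ ha hb); auto.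
  destruct (pw_card U lU cU m) as [c hc].
  specialize (IHhij c ha hc). pose proof (card_pw_mono U u m c b hu hc hb). lia. Qed.

Lemma card_pw0 U c : has_card (pw U 0) c -> c = 1.
Proof. intro h. apply (card_uniq _ _ _ h). exists [one]. split. constructor; auto. constructor.
  split; auto. intro x. rewrite pw_0. simpl; split; intro; [left|destruct H]; auto. contradiction. Qed.

Lemma card_pw_pow U lU n k : (forall x, U x -> In x lU) -> has_card (pw U n) k -> forall t c, has_card (pw U (t * n)) c -> c <= k ^ t.
Proof. intros cU hk t. induction t; intros c hc.
  - simpl in *. apply card_pw0 in hc; lia.
  - destruct (pw_card U lU cU (t * n)) as [c' hc']. specialize (IHt c' hc').
    simpl in hc. pose proof (card_pw_mul U _ _ _ _ _ hk hc' hc). simpl.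
    eapply Nat.le_trans; [exact H|]. apply Nat.mul_le_mono_l; auto. Qed.

Section Main.
Context (U : G -> Prop) (Usym : symmetric inv U) (Ugen : generates mul one inv U (fun _ => True)).
Context (H : G -> Prop) (Hsub : is_subgroup mul one inv H).
Context (d : nat) (lg : list G) (lg_len : length lg = d)
        (lg_cov : forall x, exists g, In g lg /\ H (mul (inv g) x)).

Lemma H_one : H one. Proof. apply Hsub. Qed.
Lemma H_mul x y : H x -> H y -> H (mul x y). Proof. apply Hsub. Qed.
Lemma H_inv x : H x -> H (inv x). Proof. apply Hsub. Qed.

Lemma words x : exists l, Forall U l /\ prod l = x.
Proof. destruct (proj2 Ugen x I) as [l [f p]]. exists l; split; auto.
  eapply Forall_impl; [|exact f]. intros y [h|h]; auto. apply Usym; auto. Qed.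

Lemma coset_same g x y : H (mul (inv g) x) -> H (mul (inv g) y) -> H (mul (inv x) y).
Proof. intros hx hy. replace (mul (inv x) y) with (mul (inv (mul (inv g) x)) (mul (inv g) y)).
  apply H_mul; auto. apply H_inv; auto.
  rewrite g_invM, g_invK, <- g_assoc, g_Kr. auto. Qed.

Definition rep (x : G) : G := proj1_sig (constructive_indefinite_description _ (lg_cov x)).
Lemma rep_spec x : In (rep x) lg /\ H (mul (inv (rep x)) x).
Proof. unfold rep. destruct (constructive_indefinite_description _ (lg_cov x)); auto. Qed.

Lemma pigeon (c : nat -> G) : exists a b, a < b <= d /\ H (mul (inv (c a)) (c b)).
Proof.
  set (gs := map (fun i => rep (c i)) (seq 0 (S d))).
  assert (hn : forall i, i < S d -> nth i gs one = rep (c i)).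
  { intros i hi. unfold gs. rewrite (nth_indep _ one (rep (c 0))). rewrite (map_nth (fun i => rep (c i)) (seq 0 (S d)) 0 i), seq_nth; auto.
    rewrite length_map, length_seq; auto. }
  assert (~ NoDup gs).
  { intro nd. pose proof (NoDup_incl_length nd (l' := lg)). unfold gs in H0 at 2.
    rewrite length_map, length_seq, lg_len in H0. assert (S d <= d); [|lia]. apply H0.
    intros g hg. unfold gs in hg. apply in_map_iff in hg. destruct hg as [i [<- _]]. apply rep_spec. }
  rewrite (NoDup_nth gs one) in H0.
  apply not_all_ex_not in H0. destruct H0 as [i H0]. apply not_all_ex_not in H0. destruct H0 as [j H0].
  unfold gs in H0; rewrite length_map, length_seq in H0.
  assert (i < S d /\ j < S d /\ nth i gs one = nth j gs one /\ i <> j) as [hi [hj [e ne]]] by tauto.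
  rewrite !hn in e by auto.
  assert (forall a b, a < S d -> b < S d -> rep (c a) = rep (c b) -> H (mul (inv (c a)) (c b))).
  { intros a b _ _ ee. apply (coset_same (rep (c a))). apply rep_spec. rewrite ee. apply rep_spec. }
  destruct (Nat.lt_gt_cases i j) as [[lt|lt] _]; [exact ne| |].
  - exists i, j. split. lia. apply H1; auto.
  - exists j, i. split. lia. apply H1; auto.
Qed.

Lemma short_rep_l : forall n l, length l = n -> Forall U l -> exists j w, j < d /\ pw U j w /\ H (mul (inv w) (prod l)).
Proof.
  intro n. induction n as [n IH] using (well_founded_induction lt_wf). intros l hl fl.
  destruct (Nat.lt_ge_cases n d) as [lt|ge].
  - exists n, (prod l). split; auto. split. exists l; auto. rewrite g_Vl; apply H_one.
  - destruct (pigeon (fun i => prod (skipn i l))) as [a [b [[ab bd] hab]]]. simpl in hab.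
    set (l' := firstn a l ++ skipn b l).
    assert (hl' : length l' < n). { unfold l'. rewrite length_app, length_firstn, length_skipn. lia. }
    assert (fl' : Forall U l').
    { unfold l'. apply Forall_app; split. apply Forall_firstn; auto. apply Forall_skipn; auto. }
    destruct (IH _ hl' l' eq_refl fl') as [j [w [hj [hw hH]]]].
    exists j, w. split; auto. split; auto.
    replace (prod l) with (mul (prod (firstn a l)) (prod (skipn a l))) by (rewrite <- prod_app, firstn_skipn; auto).
    unfold l' in hH. rewrite prod_app in hH.
    replace (mul (inv w) (mul (prod (firstn a l)) (prod (skipn a l)))) with
      (mul (mul (inv w) (mul (prod (firstn a l)) (prod (skipn b l)))) (inv (mul (inv (prod (skipn a l))) (prod (skipn b l))))).
    apply H_mul; auto. apply H_inv; auto.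
    rewrite g_invM, g_invK. rewrite <- !g_assoc. rewrite g_Kr. auto.
Qed.

Lemma short_rep x : exists j w, j < d /\ pw U j w /\ H (mul (inv w) x).
Proof. destruct (words x) as [l [f <-]]. eapply short_rep_l; eauto. Qed.

Context (u0 : G) (Uu0 : U u0).

Lemma d_pos : 1 <= d.
Proof. destruct (lg_cov one) as [g [hg _]]. destruct lg; simpl in *; [contradiction|lia]. Qed.

Lemma pw_padt t j x : pw U j x -> pw U (j + 2 * t) x.
Proof. induction t; intro h. rewrite Nat.add_0_r; auto.
  replace (j + 2 * S t) with (S (S (j + 2 * t))) by lia. eapply pw_pad; eauto. Qed.

Lemma pw_to_W j x : j <= 2 * d -> pw U j x -> pw U (2 * d - 1) x \/ pw U (2 * d) x.
Proof. intros hj hx. pose proof d_pos. destruct (Nat.Even_or_Odd (2 * d - j)) as [[t ht]|[t ht]].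
  right. replace (2 * d) with (j + 2 * t) by lia. apply pw_padt; auto.
  left. replace (2 * d - 1) with (j + 2 * t) by lia. apply pw_padt; auto. Qed.

Definition W x := H x /\ (pw U (2 * d - 1) x \/ pw U (2 * d) x).

Lemma schreier_l l : Forall U l -> forall j R, j < d -> pw U j R -> H (mul (inv R) (prod l)) ->
  exists ws, Forall W ws /\ prod ws = mul (inv R) (prod l).
Proof.
  induction l as [|u l IH]; intros fl j R hj hR hH; simpl in *.
  - exists [inv R]. split. constructor; [|constructor]. split. rewrite g_1r in hH; auto.
    apply (pw_to_W j). lia. apply pw_inv; auto. simpl; auto.
  - inversion fl; subst.
    destruct (short_rep (prod l)) as [j' [R' [hj' [hR' hH']]]].
    destruct (IH H3 j' R' hj' hR' hH') as [ws [fw pws]].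
    exists (mul (mul (inv R) u) R' :: ws). split. constructor; auto. split.
    + replace (mul (mul (inv R) u) R') with (mul (mul (inv R) (mul u (prod l))) (inv (mul (inv R') (prod l)))).
      apply H_mul; auto. apply H_inv; auto.
      rewrite g_invM, g_invK, <- !g_assoc, g_Kr. auto.
    + apply (pw_to_W (j + 1 + j')). lia. apply pw_mul; auto. apply pw_mul. apply pw_inv; auto. apply pw_1; auto.
    + simpl. rewrite pws, <- !g_assoc, g_Kr. auto.
Qed.

Lemma W_gen : generates mul one inv W H.
Proof. split. intros x [h _]; auto.
  intros x hx. destruct (words x) as [l [f <-]].
  destruct (schreier_l l f 0 one ltac:(pose proof d_pos; lia) ltac:(apply pw_0; auto)) as [ws [fw p]].
  rewrite g_inv1, g_1l; auto.
  exists ws. split. eapply Forall_impl; [|exact fw]. intros; left; auto. rewrite p, g_inv1, g_1l; auto. Qed.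

Lemma W_sym : symmetric inv W.
Proof. assert (forall x, W x -> W (inv x)).
  { intros x [h [p|p]]; split; try (apply H_inv; auto). left; apply pw_inv; auto. right; apply pw_inv; auto. }
  intro x; split; auto. intro h; apply H0 in h; rewrite g_invK in h; auto. Qed.

Context (lU : list G) (cU : forall x, U x -> In x lU).

Lemma W_cover : exists l, forall x, W x -> In x l.
Proof. destruct (pw_cover U lU cU (2 * d - 1)) as [l1 h1]. destruct (pw_cover U lU cU (2 * d)) as [l2 h2].
  exists (l1 ++ l2). intros x [_ [h|h]]; apply in_or_app; auto. Qed.

Lemma W_card : exists kW, has_card W kW.
Proof. destruct W_cover as [l h]. eapply fin_card; eauto. Qed.

Lemma U_le_dW kU kW : has_card U kU -> has_card W kW -> kU <= d * kW.
Proof. intros hU [lW [_ [<- hW]]].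
  assert (forall lg', exists L, length L <= length lg' * length lW /\
     forall x, U x -> (exists g, In g lg' /\ H (mul (inv g) x)) -> In x L).
  { induction lg' as [|g lg' [L' [hl hL]]].
    - exists nil. split; auto. intros x _ [g [[] _]].
    - destruct (classic (exists u1, U u1 /\ H (mul (inv g) u1))) as [[u1 [hu1 hg1]]|nex].
      + exists (map (mul u1) lW ++ L'). split. rewrite length_app, length_map. simpl; lia.
        intros x hx [g' [[<-|hin] hH']].
        * apply in_or_app; left. apply in_map_iff. exists (mul (inv u1) x). split. apply g_Kr.
          apply hW. split. apply (coset_same g); auto.
          apply (pw_to_W 2). pose proof d_pos; lia. apply (pw_mul U 1 1); apply pw_1; auto. apply Usym; rewrite g_invK; auto.
        * apply in_or_app; right. apply hL; eauto.
      + exists L'. split. simpl; lia. intros x hx [g' [[<-|hin] hH']].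
        * exfalso; apply nex; eauto.
        * apply hL; eauto. }
  destruct (H0 lg) as [L [hl hL]]. rewrite lg_len in hl.
  eapply Nat.le_trans; [|exact hl]. eapply card_cover; eauto. Qed.

Lemma Wpow_in ws : Forall W ws -> exists i, i <= length ws /\ pw U ((2 * d - 1) * length ws + i) (prod ws).
Proof. induction ws as [|w ws IH]; intro f; cbn [length prod_list].
  - exists 0. split; auto. rewrite Nat.mul_0_r. apply pw_0; auto.
  - inversion f; subst. destruct (IH H3) as [i [hi hp]]. destruct H2 as [_ [hw|hw]].
    + exists i. split. lia. replace ((2 * d - 1) * S (length ws) + i) with ((2 * d - 1) + ((2 * d - 1) * length ws + i)) by lia.
      apply pw_mul; auto.
    + exists (S i). split. lia. pose proof d_pos.
      replace ((2 * d - 1) * S (length ws) + S i) with ((2 * d) + ((2 * d - 1) * length ws + i)) by lia.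
      apply pw_mul; auto. Qed.

Lemma Wpow_card n k kWn : has_card (pw U n) k -> has_card (pw W n) kWn -> kWn <= (n + 1) * k ^ (2 * d).
Proof. intros hk hW. pose proof d_pos.
  assert (ci : forall i c, i <= n -> has_card (pw U ((2 * d - 1) * n + i)) c -> c <= k ^ (2 * d)).
  { intros i c hi hc. destruct (pw_card U lU cU ((2 * d) * n)) as [c' hc'].
    assert (c <= c'). { apply (card_pw_le U lU u0 ((2 * d - 1) * n + i) (2 * d * n) c c'); auto. nia. }
    pose proof (card_pw_pow U lU n k cU hk (2 * d) c' hc'). lia. }
  assert (forall N, exists L, length L <= (N + 1) * k ^ (2 * d) /\
      forall i x, i <= N -> i <= n -> pw U ((2 * d - 1) * n + i) x -> In x L).
  { induction N as [|N [L' [hl hL]]].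
    - destruct (pw_card U lU cU ((2 * d - 1) * n + 0)) as [c hc].
      pose proof (ci 0 c ltac:(lia) hc). destruct hc as [lc [_ [<- hc]]].
      exists lc. split. lia. intros i x hi _ hx. replace i with 0 in hx by lia. apply hc; auto.
    - destruct (le_lt_dec (S N) n) as [hN|hN].
      + destruct (pw_card U lU cU ((2 * d - 1) * n + S N)) as [c hc].
        pose proof (ci (S N) c hN hc). destruct hc as [lc [_ [<- hc]]].
        exists (lc ++ L'). split. rewrite length_app. lia.
        intros i x hi hin hx. apply in_or_app. destruct (Nat.eq_dec i (S N)) as [->|ne].
        left; apply hc; auto. right; apply (hL i); auto; lia.
      + exists L'. split. lia. intros i x hi hin hx. apply (hL i); auto; lia. }
  destruct (H1 n) as [L [hl hL]]. eapply Nat.le_trans; [|exact hl]. eapply card_cover; eauto.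
  intros x [ws [hlen [fw <-]]]. destruct (Wpow_in ws fw) as [i [hi hp]]. subst n. apply (hL i); auto. Qed.

End Main.
End Grp.

Open Scope R_scope.

Lemma ln_le' x y : 0 < x -> x <= y -> ln x <= ln y.
Proof. intros hx [h|h]. left; apply ln_increasing; auto. subst; lra. Qed.
Lemma exp_le' x y : x <= y -> exp x <= exp y.
Proof. intros [h|h]. left; apply exp_increasing; auto. subst; lra. Qed.
Lemma fact_ge n : (n <= fact n)%nat.
Proof. induction n; simpl. lia. pose proof (lt_O_fact n). nia. Qed.
Lemma pow2_ge n : (n + 1 <= 2 ^ n)%nat.
Proof. induction n; simpl; lia. Qed.

Theorem proposition2p34
  (G : Type) (mul : G -> G -> G) (one : G) (inv : G -> G)
  (Hgrp : is_group mul one inv)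
  (U : G -> Prop) (Ufin : exists k, has_card U k)
  (Usym : symmetric inv U) (Ugen : generates mul one inv U (fun _ => True))
  (H : G -> Prop) (Hsub : is_subgroup mul one inv H)
  (d : nat) (Hidx : has_index mul one inv H d)
  (alpha beta : R) (Halpha : 0 < alpha) (Hbeta : 0 < beta)
  (HH : forall V : G -> Prop, forall kV : nat,
      has_card V kV -> symmetric inv V -> generates mul one inv V H ->
      forall (n k : nat), has_card (set_pow mul one V n) k ->
        rpow (alpha * INR kV) (beta * INR n) <= INR k) :
  let m := (2 * fact d + 1)%nat in
  forall (kU : nat), has_card U kU ->
  forall (n k : nat), has_card (set_pow mul one U n) k ->
    rpow (alpha / (Rpower 2 (INR m / beta) * INR d) * INR kU)
         (beta * INR n / INR m) <= INR k.
Proof.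
  intros m kU hkU n k hk.
  destruct Hidx as [lg [lglen [lgcov _]]].
  pose proof (d_pos mul one inv H d lg lglen lgcov) as dpos.
  pose proof hkU as [lU [_ [lUlen hlU]]].
  assert (cU : forall x, U x -> In x lU) by (intros; apply hlU; auto).
  assert (Hm : (2 * d <= m)%nat) by (unfold m; pose proof (fact_ge d); lia).
  assert (Dpos : 1 <= INR d) by (apply (le_INR 1); auto).
  assert (Mpos : 1 <= INR m) by (apply (le_INR 1); lia).
  assert (Mge : 2 * INR d <= INR m) by (replace 2 with (INR 2) by (simpl; lra); rewrite <- mult_INR; apply le_INR; auto).
  assert (P2 : 0 < Rpower 2 (INR m / beta)) by (unfold Rpower; apply exp_pos).
  destruct n as [|n'].
  - apply card_pw0 in hk. subst k. replace (beta * INR 0 / INR m) with 0 by (simpl; field; lra).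
    unfold rpow; simpl INR. destruct Req_EM_T. destruct Req_EM_T; lra. unfold Rpower. rewrite Rmult_0_l, exp_0. lra.
  - set (n := S n') in *.
    assert (Npos : 1 <= INR n) by (apply (le_INR 1); unfold n; lia).
    assert (epos : 0 < beta * INR n / INR m) by (apply Rdiv_lt_0_compat; try apply Rmult_lt_0_compat; lra).
    destruct lU as [|u0 lU'].
    +
      simpl in lUlen. subst kU. rewrite Rmult_0_r. unfold rpow. destruct Req_EM_T; [|lra].
      destruct Req_EM_T; [lra|]. apply pos_INR.
    + assert (Uu0 : U u0) by (apply hlU; left; auto).
      assert (kpos : (1 <= k)%nat).
      { destruct k; [|lia]. exfalso. destruct hk as [l0 [_ [l0len hl0]]]. destruct l0; [|discriminate].
        apply (hl0 (prod_list mul one (repeat u0 n))). exists (repeat u0 n). split. apply repeat_length.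
        split; auto. apply Forall_forall. intros x hx. apply repeat_spec in hx; subst; auto. }
      assert (kUpos : (1 <= kU)%nat) by (simpl in lUlen; lia).
      set (W0 := W mul one U H d).
      destruct (W_card mul one inv Hgrp U H d _ cU) as [kW hkW].
      destruct (W_cover mul one inv Hgrp U H d _ cU) as [lW cW].
      destruct (pw_card mul one inv Hgrp W0 lW cW n) as [kWn hkWn].
      pose proof (HH W0 kW hkW (W_sym mul one inv Hgrp U Usym H Hsub d)
                    (W_gen mul one inv Hgrp U Usym Ugen H Hsub d lg lglen lgcov u0 Uu0) n kWn hkWn) as hHH.
      pose proof (U_le_dW mul one inv Hgrp U Usym H Hsub d lg lglen lgcov u0 Uu0 kU kW hkU hkW) as hUW.
      pose proof (Wpow_card mul one inv Hgrp U H d lg lglen lgcov u0 Uu0 _ cU n k kWn hk hkWn) as hWn.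
      pose proof (pow2_ge n) as p2n.
      apply le_INR in hUW. apply le_INR in hWn. apply le_INR in kpos. apply le_INR in kUpos. apply le_INR in p2n.
      rewrite mult_INR in hUW. rewrite mult_INR, pow_INR, plus_INR in hWn. rewrite pow_INR, plus_INR in p2n.
      change (INR 1) with 1 in kpos, kUpos, p2n, hWn. change (INR 2) with 2 in p2n.
      set (D := INR d) in *. set (KU := INR kU) in *. set (KW := INR kW) in *. set (K := INR k) in *.
      set (N := INR n) in *. set (M := INR m) in *. set (Kn := INR kWn) in *.
      assert (KWpos : 0 < KW) by (apply (Rmult_lt_reg_l D); lra).
      assert (aKW : 0 < alpha * KW) by (apply Rmult_lt_0_compat; lra).
      unfold rpow in hHH. destruct Req_EM_T as [e|_]; [lra|].
      assert (Rpower (alpha * KW) (beta * N) > 0) by (unfold Rpower; apply exp_pos).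
      assert (Knpos : 0 < Kn) by lra.
      apply ln_le' in hHH; auto. rewrite ln_Rpower in hHH.
      assert (hKn : ln Kn <= N * ln 2 + INR (2 * d) * ln K).
      { eapply Rle_trans. apply ln_le'; auto. apply Rle_trans with (2 ^ n * K ^ (2 * d)).
        eapply Rle_trans; [exact hWn|]. apply Rmult_le_compat_r. apply pow_le; lra. lra.
        apply Rle_refl.
        rewrite ln_mult, !ln_pow. unfold N; lra. all: try apply pow_lt; lra. }
      rewrite mult_INR in hKn. simpl INR in hKn. fold D in hKn.
      assert (L1 : ln alpha + ln KU - ln D <= ln (alpha * KW)).
      { assert (e : ln (alpha * KU * / D) = ln alpha + ln KU - ln D).
        { rewrite !ln_mult, ln_Rinv; try lra. all: try apply Rmult_lt_0_compat; try apply Rinv_0_lt_compat; lra. }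
        rewrite <- e. apply ln_le'. apply Rmult_lt_0_compat. apply Rmult_lt_0_compat; lra. apply Rinv_0_lt_compat; lra.
        apply (Rmult_le_reg_r D). lra. rewrite Rmult_assoc, Rinv_l by lra. rewrite Rmult_1_r, Rmult_assoc.
        apply Rmult_le_compat_l; lra. }
      set (y := alpha / (Rpower 2 (M / beta) * D) * KU).
      assert (ypos : 0 < y).
      { unfold y. apply Rmult_lt_0_compat; [|lra]. apply Rdiv_lt_0_compat; auto. apply Rmult_lt_0_compat; lra. }
      assert (lny : ln y = ln alpha - M / beta * ln 2 - ln D + ln KU).
      { unfold y, Rdiv. rewrite ln_mult, ln_mult, ln_Rinv, ln_mult, ln_Rpower; try lra.
        all: try apply Rmult_lt_0_compat; try apply Rinv_0_lt_compat; try apply Rmult_lt_0_compat; lra. }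
      unfold rpow. destruct Req_EM_T as [e|_]; [lra|].
      unfold Rpower. rewrite <- (exp_ln K) by lra. apply exp_le'. rewrite lny.
      assert (lnK : 0 <= ln K) by (rewrite <- ln_1; apply ln_le'; lra).
      assert (ln2 : 0 < ln 2) by (pose proof ln_lt_2; lra).
      set (L := ln alpha + ln KU - ln D) in *.
      assert (hT : beta * N * L - N * ln 2 <= 2 * D * ln K).
      { assert (beta * N * L <= beta * N * ln (alpha * KW)). apply Rmult_le_compat_l; auto. apply Rmult_le_pos; lra. lra. }
      replace (beta * N / M * (ln alpha - M / beta * ln 2 - ln D + ln KU)) with ((beta * N * L - N * ln 2) / M + N * ln 2 / M - N * ln 2)
        by (unfold L; field; split; lra).
      set (T := beta * N * L - N * ln 2) in *.
      apply (Rmult_le_reg_r M). lra.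
      replace ((T / M + N * ln 2 / M - N * ln 2) * M) with (T + N * ln 2 - M * (N * ln 2)) by (field; lra).
      assert (0 <= (M - 1) * (N * ln 2)) by (apply Rmult_le_pos; try apply Rmult_le_pos; lra).
      assert (0 <= (M - 2 * D) * ln K) by (apply Rmult_le_pos; lra).
      destruct (Rle_lt_dec T 0); nra.
Qed.
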